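(* Let $q$ be a prime power, let $n \le m$ and $1 \le k \le n$ be integers, and let $\mathcal G(n,k)$ be a Gabidulin code of length $n$ and dimension $k$ over $\mathbb F_{q^m}$, with minimum rank distance $d = n-k+1$. Let $\tau$ be an integer with $0 \le \tau < d$. Then there exists a word $\mathbf r \in \mathbb F_{q^m}^n$ such that $$\ell \;\ge\; \left|\mathcal B_{\tau}(\mathbf r) \cap \mathcal G(n,k)\right| \;\ge\; \frac{\left[\begin{smallmatrix} n \\ n-\tau\end{smallmatrix}\right]_q}{(q^m)^{n-\tau-k}} \;\ge\; q^m\, q^{\tau(m+n) - \tau^2 - md},$$ where $\ell = \max_{\mathbf r' \in \mathbb F_{q^m}^n} |\mathcal B_\tau(\mathbf r') \cap \mathcal G(n,k)|$. In particular, for $n = m$: $\ell \ge q^n q^{2n\tau - \tau^2 - nd}$.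
   Context: For $x \in \mathbb F_{q^m}$ write $x^{[i]} = x^{q^i}$. A linearized polynomial over $\mathbb F_{q^m}$ is $f(x) = \sum_{i=0}^{d_f} f_i x^{[i]}$ with $f_i \in \mathbb F_{q^m}$; if $f_{d_f} \ne 0$, $d_f$ is its $q$-degree. A Gabidulin code $\mathcal G(n,k)$ of length $n \le m$ and dimension $k$ over $\mathbb F_{q^m}$ is the set $\{(f(\alpha_0), \dots, f(\alpha_{n-1})) : f \text{ linearized over } \mathbb F_{q^m},\ \deg_q f < k\}$, where $\alpha_0,\dots,\alpha_{n-1} \in \mathbb F_{q^m}$ are fixed and linearly independent over $\mathbb F_q$. Fixing a basis of $\mathbb F_{q^m}$ over $\mathbb F_q$, each vector $\mathbf x \in \mathbb F_{q^m}^n$ corresponds to a matrix $\mathbf X \in \mathbb F_q^{m \times n}$, and $\mathrm{rank}(\mathbf x)$ is the rank of $\mathbf X$ over $\mathbb F_q$; the rank distance between $\mathbf x,\mathbf y$ is $\mathrm{rank}(\mathbf x - \mathbf y)$. The minimum rank distance of the Gabidulin code is $d = n-k+1$. $\mathcal B_\tau(\mathbf a)$ denotes the set of $\mathbf x \in \mathbb F_{q^m}^n$ with $\mathrm{rank}(\mathbf x - \mathbf a) \le \tau$. The Gaussian binomial is $\left[\begin{smallmatrix} n \\ s\end{smallmatrix}\right]_q = \prod_{i=0}^{s-1} \frac{q^n - q^i}{q^s - q^i}$, the number of $s$-dimensional subspaces of an $n$-dimensional $\mathbb F_q$-vector space. *)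

(* Defs.v *)
From HB Require Import structures.
From mathcomp Require Import all_boot all_order all_algebra all_field.
Set Implicit Arguments. Unset Strict Implicit. Unset Printing Implicit Defensive.
Import Order.TTheory GRing.Theory Num.Theory.
Local Open Scope ring_scope.

(* Setting: F = F_q is a finite field (q = #|F|, a prime power),
   L = F_{q^m} is a finite extension of F with m = \dim {:L}.
   FL := finvect_type L is L with its canonical finite-type structure. *)
Notation FL L := (finvect_type L).

Section Gabidulin.
Variables (F : finFieldType) (L : fieldExtType F).

Definition frobq (x : L) (i : nat) : L := x ^+ (#|F| ^ i)%N.

Definition lin_eval (k : nat) (f : 'I_k -> L) (x : L) : L :=
  \sum_(i < k) f i * frobq x i.

Definition gabidulin (n k : nat) (alpha : 'I_n -> L) : {set 'rV[FL L]_n} :=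
  [set (\row_(j < n) (lin_eval f (alpha j) : FL L)) | f : {ffun 'I_k -> FL L}].

Definition vec_mat (n : nat) (x : 'rV[FL L]_n) : 'M[F]_(\dim {:L}, n) :=
  \matrix_(i, j) coord (vbasis {:L}) i (x 0 j : L).

Definition rank_vec (n : nat) (x : 'rV[FL L]_n) : nat := \rank (vec_mat x).

Definition rank_dist (n : nat) (x y : 'rV[FL L]_n) : nat := rank_vec (x - y).

Definition rank_ball (n tau : nat) (a : 'rV[FL L]_n) : {set 'rV[FL L]_n} :=
  [set x | (rank_dist x a <= tau)%N].

End Gabidulin.

Definition gauss_binom (q n s : nat) : rat :=
  \prod_(i < s) (((q ^ n)%N%:R - (q ^ i)%N%:R) / ((q ^ s)%N%:R - (q ^ i)%N%:R)).

(* Main.v *)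
Require Import Defs.
From HB Require Import structures.
From mathcomp Require Import all_boot all_order all_algebra all_field.
From mathcomp Require Import zify ring lra.
Set Implicit Arguments. Unset Strict Implicit. Unset Printing Implicit Defensive.
Import Order.TTheory GRing.Theory Num.Theory.
Local Open Scope ring_scope.
Lemma gauss_ge (q n s : nat) : (1 < q)%N -> (s <= n)%N ->
  (q ^ (s * (n - s)))%N%:R <= gauss_binom q n s.
Proof.
move=> q1 sn; rewrite /gauss_binom mulnC expnM natrX.
have -> : ((q ^ (n - s))%N%:R : rat) ^+ s = \prod_(i < s) (q ^ (n - s))%N%:R.
  by rewrite prodr_const card_ord.
apply: ler_prod => i _; rewrite ler0n /=.
have q0 : (0 < q)%N by apply: ltnW.
have lt : (q ^ i < q ^ s)%N by rewrite ltn_exp2l.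
rewrite ler_pdivlMr; last by rewrite subr_gt0 ltr_nat.
rewrite -!natrB ?(ltnW lt) // ?leq_exp2l // ?(leq_trans (ltnW (ltn_ord i))) //.
rewrite -natrM ler_nat mulnBr -!expnD subnK //.
by rewrite leq_sub2l // leq_exp2l // leq_addl.
Qed.

Lemma arith (q m n k tau : nat) : (1 < q)%N -> (tau + k <= n)%N ->
 (q ^ m)%N%:R * (q%:R ^ ((tau * (m + n))%N%:Z - (tau ^ 2)%N%:Z - (m * (n - k + 1))%N%:Z))
   <= gauss_binom q n (n - tau) / ((q ^ m)%N%:R ^+ (n - tau - k)) :> rat.
Proof.
move=> q1 h.
have -> : (tau * (m + n))%N%:Z - (tau ^ 2)%N%:Z - (m * (n - k + 1))%N%:Z =
 (tau * (n - tau))%N%:Z - (m * (n - tau - k) + m)%N%:Z by nia.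
have Q0 : (q%:R : rat) != 0 by rewrite pnatr_eq0 -lt0n ltnW.
rewrite expfzDr // -exprnP -exprnN !natrX exprD -exprM.
set Q := (q%:R : rat).
have -> : Q ^+ m * (Q ^+ (tau * (n - tau)) / (Q ^+ (m * (n - tau - k)) * Q ^+ m))
  = Q ^+ (tau * (n - tau)) / Q ^+ (m * (n - tau - k)).
  by field; rewrite ?expf_neq0.
apply: ler_wpM2r; first by rewrite invr_ge0 exprn_ge0 // exprn_ge0 // ler0n.
rewrite -natrX mulnC.
have := @gauss_ge q n (n - tau) q1 (leq_subr tau n); rewrite subKn //.
by apply: leq_trans h; rewrite leq_addr.
Qed.

Section S.
Variables (F : finFieldType) (L : fieldExtType F).
Local Notation q := #|F|.

Lemma qnat : [pchar L].-nat q.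
Proof.
have [p pp pc] := finPcharP F.
rewrite (eq_pnat _ (@pchar_lalg F L)) (eq_pnat _ (pcharf_eq pc)).
rewrite (card_pprimeChar pc) pnatX pnat_id //.
Qed.

Lemma q_gt1 : (1 < q)%N.
Proof. exact: finNzRing_gt1. Qed.

Lemma frobqD (x y : L) i : frobq (x + y) i = frobq x i + frobq y i.
Proof. by rewrite /frobq exprDn_pchar // pnatX qnat. Qed.

Lemma frobq0 i : frobq (0 : L) i = 0.
Proof. by rewrite /frobq expr0n /= expn_eq0 (gtn_eqF (ltnW q_gt1)). Qed.

Lemma expF_q (a : F) i : a ^+ (q ^ i) = a.
Proof. by elim: i => [|i IH]; rewrite ?expr1 // expnS exprM expf_card IH. Qed.

Lemma frobqZ (a : F) (x : L) i : frobq (a *: x) i = a *: frobq x i.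
Proof. by rewrite /frobq exprZn expF_q. Qed.

Lemma frobq_sum (I : Type) (r : seq I) (P : pred I) (g : I -> L) i :
  frobq (\sum_(j <- r | P j) g j) i = \sum_(j <- r | P j) frobq (g j) i.
Proof. exact: (big_morph (fun x => frobq x i) (fun x y => frobqD x y i) (frobq0 i)). Qed.

Lemma lin_evalD t (g : 'I_t -> L) x y : lin_eval g (x + y) = lin_eval g x + lin_eval g y.
Proof. by rewrite /lin_eval -big_split; apply: eq_bigr => i _; rewrite frobqD mulrDr. Qed.

Lemma lin_evalZ t (g : 'I_t -> L) (a : F) x : lin_eval g (a *: x) = a *: lin_eval g x.
Proof. by rewrite /lin_eval scaler_sumr; apply: eq_bigr => i _; rewrite frobqZ scalerAr. Qed.

Lemma lin_eval0 t (g : 'I_t -> L) : lin_eval g 0 = 0.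
Proof. by rewrite /lin_eval big1 // => i _; rewrite frobq0 mulr0. Qed.

Lemma lin_eval_sum t (g : 'I_t -> L) (I : finType) (c : I -> F) (b : I -> L) :
  lin_eval g (\sum_l c l *: b l) = \sum_l c l *: lin_eval g (b l).
Proof.
rewrite (big_morph (lin_eval g) (lin_evalD g) (lin_eval0 g)).
by apply: eq_bigr => l _; rewrite lin_evalZ.
Qed.


Lemma L1 t (I : finType) (g : 'I_t -> L) (b : I -> L) : (t <= #|I|)%N ->
  injective (fun c : {ffun I -> F} => \sum_l c l *: b l) ->
  (forall l, lin_eval g (b l) = 0) -> forall i, g i = 0.
Proof.
move=> tI inj hb i0; apply/eqP/negPn/negP => gi0.
pose Q : {poly L} := \sum_(i < t) g i *: 'X^(q ^ i).
have Q0 : Q != 0.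
  apply/eqP => /(congr1 (fun p : {poly L} => p`_(q ^ i0))).
  rewrite coef_sum (bigD1 i0) //= big1 ?addr0 ?coefZ ?coefXn ?eqxx ?mulr1 ?coef0.
    by move/eqP; rewrite (negbTE gi0).
  move=> j /negbTE ji; rewrite coefZ coefXn.
  case: eqP => [/(expnI q_gt1)/val_inj/eqP|]; first by rewrite eq_sym ji.
  by rewrite mulr0.
have QE x : Q.[x] = lin_eval g x.
  rewrite horner_sum /lin_eval; apply: eq_bigr => i _.
  by rewrite hornerZ hornerXn.
pose rs := map (fun c : {ffun I -> F} => \sum_l c l *: b l) (enum {: {ffun I -> F}}).
have := max_poly_roots (rs := rs) Q0.
have -> : all (root Q) rs.
  apply/allP => x /mapP [c _ ->]; rewrite /root QE lin_eval_sum.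
  by rewrite big1 // => l _; rewrite hb scaler0.
have -> : uniq rs by rewrite map_inj_uniq ?enum_uniq.
rewrite size_map -cardE card_ffun => /(_ isT isT) lt.
have : (size Q <= (q ^ t.-1).+1)%N.
  apply: (leq_trans (size_sum _ _ _)); apply/bigmax_leqP => i _.
  apply: (leq_trans (size_scale_leq _ _)); rewrite size_polyXn ltnS leq_exp2l ?q_gt1 //.
  by rewrite -ltnS prednK ?ltn_ord // (leq_ltn_trans _ (ltn_ord i0)).
move=> /(leq_trans lt); rewrite ltnS leq_exp2l ?q_gt1 // => h.
have : (t <= t.-1)%N by apply: (leq_trans tI h).
by case: t {g Q Q0 QE hb gi0 tI h lt inj} i0 => [[]|n _] /=; rewrite ?ltnn.
Qed.
Lemma card_fr n m : (m <= n)%N ->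
  #|[pred A : 'M[F]_(m, n) | \rank A == m]| = (\prod_(i < m) (#|F| ^ n - #|F| ^ i))%N.
Proof.
set p := #|F|.
pose fr m := [pred A : 'M[F]_(m, n) | \rank A == m].
elim: m => [_ | m IHm /ltnW-le_mn].
  rewrite big_ord0 (@eq_card1 _ (0 : 'M_(0, n))) //= => A.
  by rewrite flatmx0 !inE mxrank.unlock !eqxx.
rewrite big_ord_recr /= -{}IHm //.
rewrite -sum_nat_const /= -sum1_card -add1n.
rewrite (partition_big dsubmx (fr m)) /= => [|A]; last first.
  rewrite !inE -{1}(vsubmxK A); move: {A}(_ A) (_ A) => Ad Au Afull.
  rewrite eqn_leq rank_leq_row -(leq_add2l (\rank Au)) -mxrank_sum_cap.
  rewrite {1 3}[@mxrank]lock addsmxE (eqnP Afull) -lock -addnA.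
  by rewrite leq_add ?rank_leq_row ?leq_addr.
apply: eq_bigr => A rAm; rewrite (reindex (col_mx^~ A)) /=; last first.
  exists usubmx => [v _ | vA]; first by rewrite col_mxKu.
  by case/andP=> _ /eqP <-; rewrite vsubmxK.
transitivity #|~: [set v *m A | v in 'rV_m]|; last first.
  rewrite cardsCs setCK card_imset ?card_mx ?card_ord ?mul1n //.
  have [B AB1] := row_freeP rAm; apply: can_inj (mulmx^~ B) _ => v.
  by rewrite -mulmxA AB1 mulmx1.
rewrite -sum1_card; apply: eq_bigl => v; rewrite !inE col_mxKd eqxx.
rewrite andbT eqn_leq rank_leq_row /= -(leq_add2r (\rank (v :&: A)%MS)).
rewrite -addsmxE mxrank_sum_cap (eqnP rAm) addnAC leq_add2r.
rewrite (ltn_leqif (mxrank_leqif_sup _)) ?capmxSl // sub_capmx submx_refl.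
by congr (~~ _); apply/submxP/imsetP=> [] [u]; exists u.
Qed.

Lemma row_free_colv m n (A : 'M[F]_(m,n)) (v : 'rV_n) :
  row_free A -> row_free (col_mx v A) = ~~ (v <= A)%MS.
Proof.
move=> rAm; rewrite /row_free eqn_leq rank_leq_row /= -(leq_add2r (\rank (v :&: A)%MS)).
rewrite -addsmxE mxrank_sum_cap (eqnP rAm) addnAC leq_add2r.
by rewrite (ltn_leqif (mxrank_leqif_sup _)) ?capmxSl // sub_capmx submx_refl.
Qed.

Variables (n : nat) (alpha : 'I_n -> L).
Hypothesis alpha_free : forall d : 'I_n -> F, \sum_j d j *: alpha j = 0 -> forall j, d j = 0.

Definition bvec (v : 'rV[F]_n) : L := \sum_j v 0 j *: alpha j.

Lemma bvec_sum (I : finType) (c : I -> F) (v : I -> 'rV[F]_n) :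
  bvec (\sum_i c i *: v i) = \sum_i c i *: bvec (v i).
Proof.
rewrite /bvec; under eq_bigr => j _ do rewrite summxE scaler_suml.
rewrite exchange_big /=; apply: eq_bigr => i _; rewrite scaler_sumr.
by apply: eq_bigr => j _; rewrite mxE scalerA.
Qed.

Lemma bvec_inj : injective bvec.
Proof.
move=> u v e; apply/rowP => j; apply/eqP; rewrite -subr_eq0; apply/eqP.
apply: (alpha_free (d := fun j => u 0 j - v 0 j)).
under eq_bigr => i _ do rewrite scalerBl.
by rewrite sumrB -/(bvec u) -/(bvec v) e subrr.
Qed.

Lemma comb_inj r (C : 'M[F]_(r, n)) : row_free C ->
  injective (fun c : {ffun 'I_r -> F} => \sum_i c i *: bvec (row i C)).
Proof.
move=> fC c c' /=; rewrite -!bvec_sum => /bvec_inj.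
have E (d : {ffun 'I_r -> F}) : \sum_i d i *: row i C = (\row_i d i) *m C.
  by rewrite mulmx_sum_row; apply: eq_bigr => i _; rewrite mxE.
rewrite !E => /(row_free_inj fC) e; apply/ffunP => i.
by have := congr1 (fun v : 'rV_r => v 0 i) e; rewrite !mxE.
Qed.


Definition beta s (A : 'M[F]_(s,n)) (l : 'I_s) : L := bvec (row l A).
Definition Mo s (A : 'M[F]_(s,n)) : 'M[L]_s := \matrix_(i, l) frobq (beta A l) i.
Definition rhs s (A : 'M[F]_(s,n)) : 'rV[L]_s := \row_l frobq (beta A l) s.
Definition coef s (A : 'M[F]_(s,n)) : 'rV[L]_s := - rhs A *m invmx (Mo A).
Definition ext s (f : 'rV[L]_s) : 'I_s.+1 -> L :=
  fun i => if @insub _ (fun k => k < s)%N 'I_s (val i) is Some j then f 0 j else 1.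

Lemma lin_eval_ext s (f : 'rV[L]_s) x :
  lin_eval (ext f) x = lin_eval (fun i => f 0 i) x + frobq x s.
Proof.
rewrite /lin_eval big_ord_recr /= /ext insubF ?ltnn // mul1r; congr (_ + _).
by apply: eq_bigr => i _; rewrite /= valK.
Qed.

Lemma Mo_unit s (A : 'M[F]_(s,n)) : row_free A -> Mo A \in unitmx.
Proof.
move=> fA; rewrite unitmxE unitfE; apply/negP => /det0P [v v0 hv].
move/negP: v0; apply; apply/eqP/rowP => i; rewrite mxE.
apply: (L1 (g := fun i => v 0 i) (b := beta A) _ (comb_inj fA)) => [|l].
  by rewrite card_ord.
have := congr1 (fun w : 'rV_s => w 0 l) hv; rewrite !mxE => e.
rewrite /lin_eval -[RHS]e; apply: eq_bigr => j _; by rewrite mxE.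
Qed.

Lemma coefP s (A : 'M[F]_(s,n)) : row_free A ->
  forall l, lin_eval (ext (coef A)) (beta A l) = 0.
Proof.
move=> fA l; have : coef A *m Mo A = - rhs A by rewrite /coef mulmxKV ?Mo_unit.
move/(congr1 (fun w : 'rV_s => w 0 l)); rewrite !mxE lin_eval_ext => e.
rewrite /lin_eval; apply/eqP; rewrite addr_eq0; apply/eqP; rewrite -e.
by apply: eq_bigr => j _; rewrite [Mo A _ _]mxE.
Qed.

Definition word s (f : 'rV[L]_s) : 'rV[FL L]_n :=
  \row_j (lin_eval (ext f) (alpha j) : FL L).

Lemma word_rank s (A : 'M[F]_(s,n)) : row_free A ->
  (rank_vec (word (coef A)) <= n - s)%N.
Proof.
move=> fA.
have H : A *m (vec_mat (word (coef A)))^T = 0.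
  apply/matrixP => l i; rewrite !mxE.
  transitivity (coord (vbasis fullv) i (lin_eval (ext (coef A)) (beta A l))).
    rewrite /beta /bvec lin_eval_sum linear_sum; apply: eq_bigr => j _.
    by rewrite linearZ /= !mxE.
  by rewrite coefP // linear0.
have := mulmx0_rank_max H; rewrite mxrank_tr (eqnP fA) => h.
by rewrite /rank_vec leq_subRL // (leq_trans _ h) ?leq_addr // (leq_trans (rank_leq_row A)).
Qed.

Lemma fiber s (A B : 'M[F]_(s,n)) : row_free A -> row_free B -> coef A = coef B ->
  exists2 M : 'M[F]_s, row_free M & B = M *m A.
Proof.
move=> fA fB eAB.
have sub : (B <= A)%MS.
  apply/row_subP => l; apply/negPn/negP => nl.
  pose C := col_mx (row l B) A.
  have fC : row_free C by rewrite /C row_free_colv.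
  have h1 : (s.+1 <= #|'I_(1 + s)|)%N by rewrite card_ord.
  have h2 : forall i, lin_eval (ext (coef A)) (bvec (row i C)) = 0.
    move=> i; rewrite -(splitK i); case: (split i) => j /=; rewrite /C ?rowKu ?rowKd ?row_id.
      by rewrite eAB; apply: (coefP fB).
    exact: (coefP fA).
  have := L1 h1 (comb_inj fC) h2 ord_max.
  by rewrite /ext insubF ?ltnn // => /eqP; rewrite oner_eq0.
have [D eD] := submxP sub; exists D => //.
by rewrite /row_free eqn_leq rank_leq_row -{1}(eqnP fB) eD mxrankM_maxl.
Qed.

Definition coefF s (A : 'M[F]_(s,n)) : 'rV[FL L]_s := coef A.

Lemma count_im s :
  (#|[set A : 'M[F]_(s,n) | row_free A]| <=
   #|[set coefF A | A in [set A : 'M[F]_(s,n) | row_free A]]| *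
   #|[set M : 'M[F]_s | row_free M]|)%N.
Proof.
set FR := [set A : 'M[F]_(s,n) | row_free A].
set Im := [set coefF A | A in FR].
rewrite -sum1_card (partition_big (@coefF s) (mem Im)) /=; last first.
  by move=> A AF; apply: imset_f.
rewrite -sum_nat_const; apply: leq_sum => f /imsetP [A0 A0F ->].
rewrite sum1_card.
apply: (leq_trans _ (leq_imset_card (fun M => M *m A0) _)).
apply: subset_leq_card; apply/subsetP => A; rewrite unfold_in => /andP [AF /eqP e].
move: A0F AF; rewrite !inE => fA0 fA.
have [M fM ->] := fiber fA0 fA (esym e).
by apply: imset_f; rewrite inE.
Qed.

Lemma lin_evalB t (a b : 'I_t -> L) x :
  lin_eval (fun i => a i - b i) x = lin_eval a x - lin_eval b x.
Proof. by rewrite /lin_eval -sumrB; apply: eq_bigr => i _; rewrite mulrBl. Qed.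

Lemma rank_vecN m (w : 'rV[FL L]_m) : rank_vec (- w) = rank_vec w.
Proof.
rewrite /rank_vec -mxrank_opp; congr (\rank _); apply/matrixP => i j.
by rewrite mxE /vec_mat !mxE linearN opprK.
Qed.

Section Count.
Variables (s k : nat).
Hypotheses (ks : (k <= s)%N) (sn : (s <= n)%N).

Lemma hlt (i : 'I_(s - k)) : (k + i < s)%N.
Proof. by rewrite -ltn_subRL. Qed.

Definition hidx (i : 'I_(s - k)) : 'I_s := Ordinal (hlt i).
Definition hi (f : 'rV[FL L]_s) : 'rV[FL L]_(s - k) := \row_i f 0 (hidx i).
Definition hiPart (f : 'rV[L]_s) : 'rV[L]_s := \row_i (if (k <= i)%N then f 0 i else 0).
Definition lo (f : 'rV[L]_s) : 'I_k -> L := fun i => f 0 (widen_ord ks i).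

Lemma hi_eq (f f' : 'rV[FL L]_s) : hi f = hi f' -> forall i : 'I_s, (k <= i)%N -> f 0 i = f' 0 i.
Proof.
move=> e i ki.
have lt : (i - k < s - k)%N by rewrite ltn_sub2r // (leq_ltn_trans ki).
have := congr1 (fun w : 'rV_(s - k) => w 0 (Ordinal lt)) e; rewrite !mxE.
by have -> : hidx (Ordinal lt) = i by apply: val_inj; rewrite /= subnKC.
Qed.

Lemma hiPart_eq (f f' : 'rV[FL L]_s) : hi f = hi f' -> hiPart f = hiPart f'.
Proof.
move=> e; apply/rowP => i; rewrite !mxE; case: ifP => // ki.
exact: hi_eq.
Qed.

Lemma split_eval (f : 'rV[L]_s) x :
  lin_eval (ext f) x = lin_eval (lo f) x + lin_eval (ext (hiPart f)) x.
Proof.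
rewrite !lin_eval_ext addrA; congr (_ + _); rewrite /lin_eval /lo.
have -> : \sum_(i < k) f 0 (widen_ord ks i) * frobq x i =
          \sum_(i < s | (i < k)%N) f 0 i * frobq x i by rewrite big_ord_narrow.
rewrite (bigID (fun i : 'I_s => (i < k)%N)) /=; congr (_ + _).
rewrite big_mkcond; apply: eq_bigr => i _; rewrite mxE -leqNgt.
by case: ifP => _ //; rewrite mul0r.
Qed.

Definition gw (f : 'rV[FL L]_s) : 'rV[FL L]_n :=
  \row_j (- lin_eval (lo f) (alpha j) : FL L).

Lemma gw_G (f : 'rV[FL L]_s) : gw f \in gabidulin k alpha.
Proof.
apply/imsetP; exists [ffun i => - lo f i : FL L] => //.
apply/rowP => j; rewrite !mxE /lin_eval -sumrN; apply: eq_bigr => i _.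
by rewrite ffunE mulNr.
Qed.

Lemma gw_inj : {in [set: 'rV[FL L]_s] &, forall f f', hi f = hi f' -> gw f = gw f' -> f = f'}.
Proof.
move=> f f' _ _ eh eg; apply/rowP => i; case: (leqP k i) => ki; first exact: hi_eq.
have h1 : (k <= #|'I_n|)%N by rewrite card_ord (leq_trans ks).
have h2 : injective (fun c : {ffun 'I_n -> F} => \sum_l c l *: alpha l).
  move=> c c' /= e; apply/ffunP => j; apply/eqP; rewrite -subr_eq0; apply/eqP.
  apply: (alpha_free (d := fun j => c j - c' j)).
  under eq_bigr => l _ do rewrite scalerBl.
  by rewrite sumrB e subrr.
have h3 : forall j, lin_eval (fun i => lo f i - lo f' i) (alpha j) = 0.
  move=> j; rewrite lin_evalB; apply/eqP; rewrite subr_eq0; apply/eqP.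
  have := congr1 (fun w : 'rV_n => w 0 j) eg; rewrite !mxE; exact: oppr_inj.
have := L1 h1 h2 h3 (Ordinal ki); rewrite /lo /= => /eqP; rewrite subr_eq0 => /eqP.
by have -> : widen_ord ks (Ordinal ki) = i by apply: val_inj.
Qed.

Lemma main_count : exists r : 'rV[FL L]_n,
  (#|[set coefF A | A in [set A : 'M[F]_(s,n) | row_free A]]| <=
   #|rank_ball (n - s) r :&: gabidulin k alpha| * #|FL L| ^ (s - k))%N.
Proof.
set Im := [set coefF A | A in _].
pose cnt h := #|[set f in Im | hi f == h]|.
have H1 : (#|Im| <= #|{: 'rV[FL L]_(s - k)}| * \max_(h : 'rV[FL L]_(s - k)) cnt h)%N.
  rewrite -sum1_card (partition_big hi predT) //=.
  apply: (@leq_trans (\sum_(h : 'rV[FL L]_(s-k)) \max_(h' : 'rV[FL L]_(s - k)) cnt h')).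
    apply: leq_sum => h _; rewrite sum1_card.
    apply: (leq_trans _ (leq_bigmax h)); rewrite /cnt; apply: eq_leq.
    by apply: eq_card => f; rewrite !inE.
  by rewrite sum_nat_const.
rewrite card_mx mul1n mulnC in H1.
have [h0 eh0] : {h0 | \max_(h : 'rV[FL L]_(s - k)) cnt h = cnt h0}.
  by apply: bigop.eq_bigmax; apply/card_gt0P; exists 0.
case: (set_0Vmem [set f in Im | hi f == h0]) => [K0 | [f0 f0K]].
  exists 0; move: H1; rewrite eh0 /cnt K0 cards0 mul0n leqn0 => /eqP ->.
  by [].
exists (word (hiPart f0)).
apply: (leq_trans H1); rewrite eh0 leq_mul2r; apply/orP; right.
have gi : {in [set f in Im | hi f == h0] &, injective gw}.
  move=> f f'; rewrite !inE => /andP [_ /eqP e] /andP [_ /eqP e'].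
  by apply: gw_inj; rewrite ?inE // e e'.
rewrite /cnt -(card_in_imset gi).
apply: subset_leq_card; apply/subsetP => _ /imsetP [f fK ->].
rewrite inE gw_G andbT /rank_ball inE /rank_dist.
move: (f0K) fK; rewrite !inE => /andP [_ /eqP e0] /andP [/imsetP [A AF ->] /eqP ehA].
rewrite inE in AF.
have -> : gw (coefF A) - word (hiPart f0) = - word (coef A).
  apply/rowP => j; rewrite !mxE (split_eval (coef A)).
  rewrite (hiPart_eq (f := coefF A) (f' := f0)) ?ehA ?e0 //.
  by rewrite opprD.
apply: (leq_trans (eq_leq (rank_vecN _))); exact: word_rank.
Qed.
End Count.

Lemma gauss_eq s n' : (s <= n')%N -> gauss_binom #|F| n' s =
  (#|[set A : 'M[F]_(s,n') | row_free A]|)%:R / (#|[set M : 'M[F]_s | row_free M]|)%:R.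
Proof.
move=> sn.
have cs m0 n0 (h : (m0 <= n0)%N) : #|[set A : 'M[F]_(m0,n0) | row_free A]| =
    (\prod_(i < m0) (#|F| ^ n0 - #|F| ^ i))%N.
  by rewrite -(card_fr h); apply: eq_card => A; rewrite inE.
rewrite /gauss_binom prodf_div !cs // !natr_prod; congr (_ / _).
  apply: eq_bigr => i _; rewrite natrB // leq_exp2l ?q_gt1 //.
  exact: ltnW (leq_trans (ltn_ord i) sn).
apply: eq_bigr => i _; rewrite natrB // leq_exp2l ?q_gt1 //.
exact: ltnW (ltn_ord i).
Qed.
End S.

Unset Implicit Arguments.
Theorem theorem1 (F : finFieldType) (L : fieldExtType F)
  (n k tau : nat) (alpha : 'I_n -> L) :
  (n <= \dim {:L})%N ->
  (1 <= k)%N -> (k <= n)%N ->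
  free [seq alpha j | j <- enum 'I_n] ->
  (tau < n - k + 1)%N ->
  let q := #|F| in
  let m := \dim {:L} in
  let d := (n - k + 1)%N in
  let G := gabidulin k alpha in
  let ell := (\max_(r' : 'rV[FL L]_n) #|rank_ball tau r' :&: G|)%N in
  (exists r : 'rV[FL L]_n,
     [/\ (#|rank_ball tau r :&: G| <= ell)%N,
         gauss_binom q n (n - tau) / ((q ^ m)%N%:R ^+ (n - tau - k))
           <= (#|rank_ball tau r :&: G|)%:R :> rat
       & (q ^ m)%N%:R * (q%:R ^ ((tau * (m + n))%N%:Z - (tau ^ 2)%N%:Z - (m * d)%N%:Z))
           <= gauss_binom q n (n - tau) / ((q ^ m)%N%:R ^+ (n - tau - k)) :> rat])
  /\ (n = m ->
      (q ^ n)%N%:R * (q%:R ^ ((2 * n * tau)%N%:Z - (tau ^ 2)%N%:Z - (n * d)%N%:Z))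
        <= ell%:R :> rat).
Proof.
Proof.
move=> hn k1 kn fr ht q m d G ell.
have alpha_free : forall dd : 'I_n -> F, \sum_j dd j *: alpha j = 0 -> forall j, dd j = 0.
  move=> dd e j.
  have fr' : free (map_tuple alpha (ord_tuple n)) by [].
  apply: (freeP fr' dd) => /=.
  rewrite -[RHS]e; apply: eq_bigr => i _.
  by rewrite (nth_map i) ?nth_ord_enum // size_enum_ord.
have cL : #|FL L| = (q ^ m)%N.
  by rewrite -(card_vspacef (Vector.class (FL L))) card_vspace.
have taun : (tau <= n)%N by lia.
have ks : (k <= n - tau)%N by lia.
have sn : (n - tau <= n)%N by apply: leq_subr.
have [r hr] := main_count alpha_free ks sn.
rewrite subKn // cL in hr.
have cim := count_im alpha_free (n - tau).
have q1 : (1 < q)%N by apply: q_gt1.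
have ge : gauss_binom q n (n - tau) / ((q ^ m)%N%:R ^+ (n - tau - k))
    <= (#|rank_ball tau r :&: G|)%:R :> rat.
  rewrite (gauss_eq F sn) -natrX.
  have p1 : 0 < ((q ^ m) ^ (n - tau - k))%N%:R :> rat by rewrite ltr0n expn_gt0 expn_gt0 ltnW.
  have p2 : 0 < (#|[set M : 'M[F]_(n - tau) | row_free M]|)%:R :> rat.
    rewrite ltr0n; apply/card_gt0P; exists 1%:M; rewrite inE /row_free mxrank1.
    by [].
  rewrite ler_pdivrMr // ler_pdivrMr // -!natrM ler_nat.
  apply: (leq_trans cim); rewrite leq_mul2r; apply/orP; right; exact: hr.
have part1 : exists r : 'rV[FL L]_n,
     [/\ (#|rank_ball tau r :&: G| <= ell)%N,
         gauss_binom q n (n - tau) / ((q ^ m)%N%:R ^+ (n - tau - k))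
           <= (#|rank_ball tau r :&: G|)%:R :> rat
       & (q ^ m)%N%:R * (q%:R ^ ((tau * (m + n))%N%:Z - (tau ^ 2)%N%:Z - (m * d)%N%:Z))
           <= gauss_binom q n (n - tau) / ((q ^ m)%N%:R ^+ (n - tau - k)) :> rat].
  exists r; split => //; first exact: (@leq_bigmax _ (fun r' => #|rank_ball tau r' :&: G|)).
  by apply: arith => //; lia.
split => // enm.
have := arith m q1 (_ : (tau + k <= n)%N); rewrite -/d -enm => /(_ ltac:(lia)) a.
have le1 : (#|rank_ball tau r :&: G| <= ell)%N.
  exact: (@leq_bigmax _ (fun r' => #|rank_ball tau r' :&: G|)).
have -> : (2 * n * tau)%N = (tau * (n + n))%N by lia.
apply: (le_trans a); rewrite -enm in ge; apply: (le_trans ge); by rewrite ler_nat.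
Qed.
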